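(* For every maximum-weight perfect matching $M^*$ of $G$, the induced allocation $X$ is EF1.
   Context: Setting: $n$ agents, $m$ real items $\mathcal M$, restricted additive valuations: there are values $v(g)>0$ with $v_{i,g}\in\{0,v(g)\}$ and $v_i(S)=\sum_{g\in S}v_{i,g}$; every real item is valued positively by at least one agent. Let $u_1>u_2>\dots>u_t$ be the distinct values in $\{v(g):g\in\mathcal M\}$ and $\mathcal M_f=\{g:v(g)=u_f\}$. Add a set $\mathcal M_d$ of $mn-m$ dummy items valued $0$ by all agents. The bipartite graph $G$ has left side $A=\{a_g: g\in\mathcal M\cup\mathcal M_d\}$ ($mn$ vertices) and right side $B=\{b_{(i,c)}: i\in[n], c\in[m]\}$; the set $\mathcal N_c=\{b_{(i,c)}:i\in[n]\}$ is called bucket $c$. Edges: for each real $g\in\mathcal M_f$, each agent $i$ with $v_{i,g}>0$ and each $c\in[m]$, an edge $(a_g,b_{(i,c)})$ of weight $-m^{t-f}\cdot c$; for each dummy $g$ and all $i,c$, an edge $(a_g,b_{(i,c)})$ of weight $0$; no other edges. The allocation induced by a perfect matching $M$ is $X_i=\{g\in\mathcal M: a_g \text{ matched in } M \text{ to some } b_{(i,c)}\}$. $X$ is EF1 if for all agents $i,j$ either $v_i(X_i)\ge v_i(X_j)$ or there is $g\in X_j$ with $v_i(X_i)\ge v_i(X_j\setminus\{g\})$. *)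

(* Defs.v *)
From mathcomp Require Import all_boot all_order all_algebra.
Set Implicit Arguments. Unset Strict Implicit. Unset Printing Implicit Defensive.
Import Order.TTheory GRing.Theory Num.Theory.
Local Open Scope ring_scope.

Section Defs.
Variables (R : realFieldType) (n m : nat).
Variables (v : 'I_m -> R) (val : 'I_n -> 'I_m -> R).

(* Left side A: real items (inl g) and the m*n - m dummy items (inr d). *)
Definition Left := ('I_m + 'I_(m * n - m))%type.
(* Right side B: vertices b_(i,c); c : 'I_m encodes bucket c+1 in [m]. *)
Definition Right := ('I_n * 'I_m)%type.

Definition dist_values : seq R :=
  sort (fun x y => y <= x) (undup [seq v g | g <- enum 'I_m]).
Definition tval : nat := size dist_values.
(* f such that v(g) = u_f (1-based) *)
Definition fidx (g : 'I_m) : nat := (index (v g) dist_values).+1.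

Definition is_edge (a : Left) (b : Right) : bool :=
  match a with
  | inl g => 0 < val b.1 g
  | inr _ => true
  end.

Definition edge_weight (a : Left) (b : Right) : int :=
  match a with
  | inl g => - ((m ^ (tval - fidx g))%:Z * (b.2 : nat).+1%:Z)
  | inr _ => 0
  end.

Definition perfect_matching (M : Left -> Right) : Prop :=
  bijective M /\ forall a, is_edge a (M a).

Definition matching_weight (M : Left -> Right) : int :=
  \sum_(a : Left) edge_weight a (M a).

Definition max_weight_perfect_matching (M : Left -> Right) : Prop :=
  perfect_matching M /\
  forall M' : Left -> Right, perfect_matching M' ->
    matching_weight M' <= matching_weight M.

Definition induced_alloc (M : Left -> Right) (i : 'I_n) : {set 'I_m} :=
  [set g | (M (inl g)).1 == i].

Definition bundle_value (i : 'I_n) (S : {set 'I_m}) : R :=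
  \sum_(g in S) val i g.

Definition EF1 (X : 'I_n -> {set 'I_m}) : Prop :=
  forall i j : 'I_n,
    bundle_value i (X j) <= bundle_value i (X i) \/
    exists2 g, g \in X j & bundle_value i (X j :\ g) <= bundle_value i (X i).
End Defs.

(* Main.v *)
Require Import Defs.
From mathcomp Require Import all_boot all_order all_algebra.
From mathcomp Require Import perm zify.
Import Order.TTheory GRing.Theory Num.Theory.
Local Open Scope ring_scope.

Lemma sum_tperm (T:finType) (U:Type) (f : T -> U -> int) (F : T -> U) x y : x != y ->
 \sum_a f a (F (tperm x y a)) = \sum_a f a (F a) + (f x (F y) + f y (F x) - f x (F x) - f y (F y)).
Proof.
move=> xy.
rewrite (bigD1 x) // (bigD1 y) 1?eq_sym //= [in RHS](bigD1 x) // [in RHS](bigD1 y) 1?eq_sym //=.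
rewrite tpermL tpermR.
rewrite (eq_bigr (fun a => f a (F a))); last first.
  by move=> a /andP[ay ax]; rewrite tpermD // eq_sym.
lia.
Qed.

Lemma in_dist {R : realFieldType} {m} (v : 'I_m -> R) g : v g \in dist_values v.
Proof. by rewrite mem_sort mem_undup map_f // mem_enum. Qed.

Lemma fidx_le (R : realFieldType) m (v : 'I_m -> R) g : (fidx v g <= Defs.tval v)%N.
Proof. by rewrite /fidx /Defs.tval index_mem in_dist. Qed.

Lemma fidx_lt (R : realFieldType) m (v : 'I_m -> R) g h : v h < v g -> (fidx v g < fidx v h)%N.
Proof.
move=> hg; rewrite /fidx ltnS.
have tr : transitive (fun x y : R => y <= x) by move=> a b c ab bc; exact: le_trans bc ab.
have so : sorted (fun x y : R => y <= x) (dist_values v).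
  by apply: sort_sorted => a b; exact: le_total.
case: (ltngtP (index (v g) (dist_values v)) (index (v h) (dist_values v))) => // H.
  have := sorted_ltn_index tr so _ _ (in_dist v h) (in_dist v g) H.
  by rewrite /= leNgt hg.
have := congr1 (fun k => nth 0 (dist_values v) k) H.
rewrite !nth_index ?in_dist // => E; by rewrite E ltxx in hg.
Qed.
Definition predo {m} (c : 'I_m) : 'I_m := Ordinal (leq_ltn_trans (leq_pred c) (ltn_ord c)).

Theorem mainTheorem10 (R : realFieldType) (n m : nat)
    (v : 'I_m -> R) (val : 'I_n -> 'I_m -> R) :
  (forall g, 0 < v g) ->
  (forall i g, val i g = 0 \/ val i g = v g) ->
  (forall g, exists i, 0 < val i g) ->
  forall M : Left n m -> Right n m,
    max_weight_perfect_matching v val M ->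
    EF1 val (induced_alloc M).
Proof.
move=> vpos hval _ M [[Mbij Medge] hmax].
have [Minv MK KM] := Mbij.
have val_ge0 : forall i g, 0 <= val i g.
  by move=> i g; case: (hval i g) => ->; rewrite ?lexx ?ltW.
have val_pos : forall i g, 0 < val i g -> val i g = v g.
  by move=> i g; case: (hval i g) => -> //; rewrite ltxx.
have dummy : forall i g, (M (inl g)).1 != i -> exists d, (M (inr d)).1 = i.
  move=> i g gi.
  case: (pickP (fun d => (M (inr d)).1 == i)) => [d /eqP <-|none]; first by exists d.
  have allreal : forall c : 'I_m, exists h, Minv (i, c) = inl h.
    move=> c; case E: (Minv (i, c)) => [h|d]; first by exists h.
    by move: (none d); rewrite -E KM /= eqxx.
  pose f (c : 'I_m) := if Minv (i, c) is inl h then h else c.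
  have fE : forall c, Minv (i, c) = inl (f c).
    by move=> c; have [h E] := allreal c; rewrite /f E.
  have finj : injective f.
    move=> c1 c2 E.
    have : M (Minv (i, c1)) = M (Minv (i, c2)) by rewrite !fE E.
    by rewrite !KM => -[].
  have [finv fK Kf] := injF_bij finj.
  move: (fE (finv g)); rewrite Kf => E.
  by move: gi; rewrite -E KM /= eqxx.
have mw : forall (F : Left n m -> Right n m) x y, x != y ->
    matching_weight v (F \o tperm x y) = matching_weight v F +
     (edge_weight v x (F y) + edge_weight v y (F x) - edge_weight v x (F x) - edge_weight v y (F y)).
  by move=> F x y xy; rewrite /matching_weight /= (@sum_tperm _ _ (edge_weight v) F _ _ xy).
have m0 : forall g : 'I_m, (0 < m)%N by move=> g; exact: leq_ltn_trans (leq0n g) (ltn_ord g).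
have claim : forall i g, (M (inl g)).1 != i -> (0 < (M (inl g)).2)%N -> 0 < val i g ->
    exists h, Minv (i, predo (M (inl g)).2) = inl h /\ val i g <= val i h.
  move=> i g gi c0 vig.
  case E: (Minv (i, predo (M (inl g)).2)) => [h|d].
    exists h; split => //.
    have Mh : M (inl h) = (i, predo (M (inl g)).2) by rewrite -E KM.
    have vih : 0 < val i h by move: (Medge (inl h)); rewrite Mh.
    rewrite leNgt; apply/negP => lt.
    move: lt; rewrite (val_pos _ _ vih) (val_pos _ _ vig) => lt.
    have [d Md] := dummy i g gi.
    pose M' := (M \o tperm (inl g) (inl h)) \o tperm (inl h) (inr d).
    have pm : perfect_matching val M'.
      split.
        by apply: bij_comp; [apply: bij_comp => //|]; apply: inv_bij; exact: tpermK.
      move=> a; rewrite /M' /=.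
      case: (tpermP (inl h) (inr d) a) => [->|->|ah ad].
      - by rewrite tpermD //= Md.
      - by rewrite tpermR.
      - case: (tpermP (inl g) (inl h) a) => [->|Ea|_ _]; last exact: Medge.
        + by rewrite Mh /=.
        + by move: ah; rewrite Ea.
    have := hmax M' pm.
    rewrite /M' mw; last by [].
    rewrite mw; last first.
      by apply/eqP => -[] hg; move: gi; rewrite hg Mh /= eqxx.
    rewrite /= tpermD // tpermR Mh /= prednK //.
    have fgh := fidx_lt _ _ _ _ _ lt.
    have fh := fidx_le _ _ v h.
    have mpos := m0 g.
    have key : (m ^ (Defs.tval v - fidx v h) * m <= m ^ (Defs.tval v - fidx v g))%N.
      rewrite -expnSr; apply: leq_pexp2l => //; lia.
    have Phpos : (0 < m ^ (Defs.tval v - fidx v h))%N by rewrite expn_gt0 mpos.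
    have c''m := ltn_ord (M (inr d)).2.
    move: key Phpos c''m c0.
    move: (m ^ (Defs.tval v - fidx v h))%N (m ^ (Defs.tval v - fidx v g))%N
          ((M (inr d)).2 : nat) ((M (inl g)).2 : nat) (matching_weight v M) => Ph Pg c2 c1 W.
    move=> *. nia.
  have Md : M (inr d) = (i, predo (M (inl g)).2) by rewrite -E KM.
  pose M' := M \o tperm (inl g) (inr d).
  have pm : perfect_matching val M'.
    split.
      by apply: bij_comp => //; apply: inv_bij; exact: tpermK.
    move=> a; rewrite /M' /=.
    case: (tpermP (inl g) (inr d) a) => [->|->|_ _]; last exact: Medge.
    + by rewrite Md /=.
    + by [].
  have := hmax M' pm.
  rewrite /M' mw // /= Md /= prednK //.
  have Pgpos : (0 < m ^ (Defs.tval v - fidx v g))%N by rewrite expn_gt0 (m0 g).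
  move: c0 Pgpos; move: (m ^ (Defs.tval v - fidx v g))%N ((M (inl g)).2 : nat) (matching_weight v M) => Pg c1 W.
  move=> *. nia.
have key : forall i j (S : {set 'I_m}), i != j -> S \subset induced_alloc M j ->
    (forall g, g \in S -> (0 < (M (inl g)).2)%N) ->
    bundle_value val i S <= bundle_value val i (induced_alloc M i).
  move=> i j S ij sub pos.
  pose phi g := if Minv (i, predo (M (inl g)).2) is inl h then h else g.
  pose A := [set g in S | 0 < val i g].
  have gj : forall g, g \in S -> (M (inl g)).1 = j.
    by move=> g /(subsetP sub); rewrite inE => /eqP.
  have phiP : forall g, g \in A ->
      Minv (i, predo (M (inl g)).2) = inl (phi g) /\ val i g <= val i (phi g).
    move=> g; rewrite inE => /andP[gS vg].
    have [|h [E le]] := claim i g _ (pos g gS) vg; first by rewrite gj // eq_sym.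
    by rewrite /phi E.
  have phi_inj : {in A &, injective phi}.
    move=> g1 g2 g1A g2A E.
    have [E1 _] := phiP g1 g1A; have [E2 _] := phiP g2 g2A.
    have : (i, predo (M (inl g1)).2) = (i, predo (M (inl g2)).2).
      by rewrite -[LHS]KM -[RHS]KM E1 E2 E.
    move=> [e].
    have g1S : g1 \in S by move: g1A; rewrite inE => /andP[].
    have g2S : g2 \in S by move: g2A; rewrite inE => /andP[].
    have p1 := pos g1 g1S; have p2 := pos g2 g2S.
    have e2 : (M (inl g1)).2 = (M (inl g2)).2 by apply: val_inj; rewrite /=; move: e p1 p2; case: (M (inl g1)).2 => [[|a] ?]; case: (M (inl g2)).2 => [[|b] ?] /=; lia.
    have : M (inl g1) = M (inl g2).
      by rewrite [M (inl g1)]surjective_pairing [M (inl g2)]surjective_pairing gj // gj // e2.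
    by move/(can_inj MK) => [].
  have sub_phi : phi @: A \subset induced_alloc M i.
    apply/subsetP => _ /imsetP[g gA ->]; rewrite inE.
    by have [E _] := phiP g gA; rewrite -E KM.
  rewrite /bundle_value.
  rewrite (bigID (fun g => 0 < val i g)) /=.
  rewrite [X in _ + X]big1 ?addr0; last first.
    move=> g /andP[_]; case: (hval i g) => -> //; by rewrite vpos.
  apply: (le_trans (y := \sum_(g in A) val i (phi g))).
    rewrite (eq_bigl (fun g => g \in A)); last by move=> g; rewrite inE.
    by apply: ler_sum => g gA; exact: (phiP g gA).2.
  rewrite -big_imset //.
  rewrite [X in _ <= X](bigID (fun h => h \in phi @: A)) /=.
  rewrite -[X in X <= _]addr0; apply: lerD.
    apply: (le_trans (y := \sum_(h in phi @: A) val i h)) => //.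
    rewrite le_eqVlt; apply/orP; left; apply/eqP; apply: eq_bigl => h /=.
    apply/idP/andP => [hA|[]//]; split => //; exact: (subsetP sub_phi).
  by apply: sumr_ge0 => h _.
move=> i j; case: (eqVneq i j) => [<-|ij]; first by left.
case: (pickP (fun g => (g \in induced_alloc M j) && ((M (inl g)).2 == 0 :> nat)))
   => [g0 /andP[g0j /eqP b0] | none].
  right; exists g0 => //.
  apply: (key i j) => //; first exact: subD1set.
  move=> g; rewrite !inE => /andP[gg0 gj].
  rewrite lt0n; apply/eqP => b; move: gg0.
  have : M (inl g) = M (inl g0).
    rewrite [M (inl g)]surjective_pairing [M (inl g0)]surjective_pairing.
    move: g0j; rewrite inE => /eqP ->; rewrite (eqP gj).
    by congr pair; apply: val_inj; rewrite /= b b0.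
  by move/(can_inj MK) => [->]; rewrite eqxx.
left; apply: (key i j) => // g gj; rewrite lt0n; apply/negP => b.
by move: (none g); rewrite gj b.
Qed.
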